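(* Let $\mathcal D$ be a finite nonempty set, and let $\mathcal A^{\mathcal D}_{P,R}$ be the subring of $\mathcal H^{\mathcal D}_{P,R}$ consisting of the free $\mathbb Z$-algebra generated by the decorated planar rooted trees (equivalently, the $\mathbb Z$-span of the planar forests). Then $(e_F)_F$, $F$ running over all planar forests decorated by $\mathcal D$, is a $\mathbb Z$-basis of $\mathcal A^{\mathcal D}_{P,R}$.
   Context: $\mathcal H^{\mathcal D}_{P,R}$ is the free associative unital $\mathbb Q$-algebra on the set of planar rooted trees (finite trees with a root, embedded in the plane, edges oriented away from the root) decorated by $\mathcal D$; its basis is the set of planar forests $t_1\cdots t_n$ ($1$ = empty forest). Coproduct: $\Delta(F)=\sum_cP^c(F)\otimes R^c(F)$ over all cuts $c=(c_i)$ of $F=t_1\cdots t_n$, each $c_i$ being the empty cut of $t_i$ ($P=1,R=t_i$), the total cut ($P=t_i,R=1$), or an admissible cut (a nonempty set of edges of $t_i$ such that every oriented path meets at most one of them, with $R^{c_i}(t_i)$ the component of the root and $P^{c_i}(t_i)$ the left-to-right planar forest of the other components); $P^c(F)=\prod_iP^{c_i}(t_i)$, $R^c(F)=\prod_iR^{c_i}(t_i)$; counit $\varepsilon(F)=0$ for $F\ne1$. $B_d^+$ grafts $t_1\cdots t_n$ (in order) on a new root decorated by $d$; $\bullet_d=B_d^+(1)$; $\gamma_d$ is the linear map with $\gamma_d(1)=0$, $\gamma_d(t_1\cdots t_n)=t_1\cdots t_{n-1}$ if $t_n=\bullet_d$, $0$ otherwise. There is a unique bilinear form $(\,,\,)$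 on $\mathcal H^{\mathcal D}_{P,R}$ with $(1,x)=\varepsilon(x)$, $(x_1x_2,y)=(x_1\otimes x_2,\Delta(y))$ and $(B_d^+(x),y)=(x,\gamma_d(y))$; it is nondegenerate, and $(e_F)_F$ denotes the basis of $\mathcal H^{\mathcal D}_{P,R}$ defined by $(e_F,G)=\delta_{F,G}$ for all planar forests $G$. *)

(* Defs.v *)
From HB Require Import structures.
From mathcomp Require Import all_boot all_order all_algebra.
Set Implicit Arguments. Unset Strict Implicit. Unset Printing Implicit Defensive.
Import Order.TTheory GRing.Theory Num.Theory.
Local Open Scope ring_scope.

Section PlanarTrees.
Variable D : eqType.

Inductive ptree : Type := Node of D & seq ptree.

(* planar forests t_1 ... t_n, the empty forest being the unit 1 *)
Definition forest := seq ptree.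

Definition Bplus (d : D) (F : forest) : ptree := Node d F.

Fixpoint enc (t : ptree) : GenTree.tree D :=
  let: Node d ch := t in GenTree.Node 0 (GenTree.Leaf d :: map enc ch).

Fixpoint dec (g : GenTree.tree D) : option ptree :=
  match g with
  | GenTree.Node _ (GenTree.Leaf d :: l) => Some (Node d (pmap dec l))
  | _ => None
  end.

Lemma encK : pcancel enc dec.
Proof.
rewrite /pcancel; fix IH 1; case=> d ch /=; congr (Some (Node d _)).
elim: ch => [|c ch IHch] //=.
by rewrite IH /= IHch.
Qed.

HB.instance Definition _ := Equality.copy ptree (pcan_type encK).

(* acuts t : the list of (P^c(t), R^c(t)) for c the empty cut or an
   admissible cut of t (each cut listed exactly once); P^c(t) is the
   left-to-right planar forest of the cut-off components. *)
Fixpoint acuts (t : ptree) : seq (forest * ptree) :=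
  let: Node d ch := t in
  let fix go (l : seq ptree) : seq (forest * seq ptree) :=
    match l with
    | [::] => [:: ([::], [::])]
    | c :: l' =>
        [seq (p.1 ++ q.1, p.2 ++ q.2)
           | p <- ([:: ([:: c], [::])] ++ [seq (x.1, [:: x.2]) | x <- acuts c]),
             q <- go l']
    end in
  [seq (p.1, Node d p.2) | p <- go ch].

Definition tcuts (t : ptree) : seq (forest * forest) :=
  ([:: t], [::]) :: [seq (x.1, [:: x.2]) | x <- acuts t].

(* Delta(F) = sum over cuts c of P^c(F) (x) R^c(F), as a list of pairs
   (with multiplicity) *)
Fixpoint coprod (F : forest) : seq (forest * forest) :=
  match F with
  | [::] => [:: ([::], [::])]
  | t :: F' => [seq (p.1 ++ q.1, p.2 ++ q.2) | p <- tcuts t, q <- coprod F']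
  end.

(* gamma_d : t_1 ... t_n |-> t_1 ... t_{n-1} if t_n = bullet_d, else 0;
   None encodes 0 *)
Definition is_bullet (d : D) (t : ptree) : bool :=
  match t with Node d' [::] => d' == d | _ => false end.

Definition gamma (d : D) (G : forest) : option forest :=
  match rev G with
  | t :: rG => if is_bullet d t then Some (rev rG) else None
  | [::] => None
  end.

(* (1, y) = eps(y); (t x2, y) = (t (x) x2, Delta y) for x2 <> 1;
   (B_d^+(x), y) = (x, gamma_d(y)). *)
Fixpoint pairL (pt : ptree -> forest -> rat) (F G : forest) {struct F} : rat :=
  match F with
  | [::] => if G is [::] then 1 else 0
  | t :: F' =>
      match F' with
      | [::] => pt t G
      | _ :: _ => \sum_(p <- coprod G) pt t p.1 * pairL pt F' p.2
      end
  end.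

Fixpoint pairT (t : ptree) (G : forest) {struct t} : rat :=
  let: Node d ch := t in
  match gamma d G with
  | Some G' => pairL pairT ch G'
  | None => 0
  end.

Definition pairF : forest -> forest -> rat := pairL pairT.

(* An element of H is represented by a formal finite Q-linear combination
   of planar forests; two representatives denote the same element iff they
   have the same coefficients. *)
Definition Hel := seq (rat * forest).

Definition coef (x : Hel) (F : forest) : rat :=
  \sum_(p <- x | p.2 == F) p.1.

Definition basisH (F : forest) : Hel := [:: (1, F)].

Definition scaleH (a : rat) (x : Hel) : Hel := [seq (a * q.1, q.2) | q <- x].

Definition form (x y : Hel) : rat :=
  \sum_(p <- x) \sum_(q <- y) p.1 * q.1 * pairF p.2 q.2.

Definition dual_basis (e : forest -> Hel) : Prop :=
  forall F G : forest, form (e F) (basisH G) = (F == G)%:R.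

(* membership in A^D_{P,R} = Z-span of the planar forests *)
Definition inA (x : Hel) : Prop := forall G : forest, coef x G \is a Num.int.

Definition zcomb (e : forest -> Hel) (c : seq (int * forest)) : Hel :=
  flatten [seq scaleH (p.1%:~R) (e p.2) | p <- c].

Definition is_Zbasis_of_A (e : forest -> Hel) : Prop :=
  [/\ forall F, inA (e F),
      forall c : seq (int * forest), uniq (unzip2 c) ->
        (forall G, coef (zcomb e c) G = 0) -> forall p, p \in c -> p.1 = 0
    & forall x, inA x -> exists c : seq (int * forest),
        forall G, coef x G = coef (zcomb e c) G].

End PlanarTrees.

(* Main.v *)
Require Import Defs.
From HB Require Import structures.
From mathcomp Require Import all_boot all_order all_algebra.
From mathcomp Require Import zify.
From Stdlib Require Import ClassicalEpsilon.
Set Implicit Arguments. Unset Strict Implicit. Unset Printing Implicit Defensive.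
Import Order.TTheory GRing.Theory Num.Theory.
Local Open Scope ring_scope.

Section Aux.
Variable D : finType.
Local Notation tree := (ptree D).
Local Notation forest := (forest D).

Lemma ptree_ind' (P : tree -> Prop) :
  (forall d ch, (forall c, c \in ch -> P c) -> P (Node d ch)) -> forall t, P t.
Proof.
move=> H; fix IH 1; case=> d ch; apply: H.
elim: ch => [|c ch IHch] c'.
  move=> Hc; exfalso; by rewrite in_nil in Hc.
rewrite in_cons => /orP[/eqP Hc | Hc]; last exact: IHch.
rewrite Hc; exact: (IH c).
Qed.

Lemma nested_ind (Pt : tree -> Prop) (Pf : forest -> Prop) :
  Pf [::] -> (forall t F, Pt t -> Pf F -> Pf (t :: F)) ->
  (forall d ch, Pf ch -> Pt (Node d ch)) -> (forall t, Pt t) /\ (forall F, Pf F).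
Proof.
move=> H0 Hc Hn.
have Ht : forall t, Pt t.
  apply: ptree_ind' => d ch IH; apply: Hn.
  elim: ch IH => [|c ch IHch] IH //; apply: Hc.
    by apply: IH; rewrite mem_head.
  by apply: IHch => c' Hc'; apply: IH; rewrite in_cons Hc' orbT.
split=> // F; elim: F => [|t F IH] //; exact: Hc.
Qed.

Lemma acutsE d (ch : forest) :
  acuts (Node d ch) = [seq (p.1, Node d p.2) | p <- coprod ch].
Proof. by rewrite /=; congr map; elim: ch => [|c ch IH] //=; rewrite IH. Qed.

Lemma tcutsE d (ch : forest) :
  tcuts (Node d ch) = ([:: Node d ch], [::]) :: [seq (p.1, [:: Node d p.2]) | p <- coprod ch].
Proof. by rewrite /tcuts acutsE -map_comp. Qed.

Lemma cat_eqnil (T : eqType) (a b : seq T) : (a ++ b == [::]) = (a == [::]) && (b == [::]).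
Proof. by case: a. Qed.

Arguments coprod : simpl never.
Arguments tcuts : simpl never.
Arguments acuts : simpl never.

Lemma coprod_consE (t : tree) (F : forest) :
  coprod (t :: F) = [seq (p.1 ++ q.1, p.2 ++ q.2) | p <- tcuts t, q <- coprod F].
Proof. by []. Qed.

Lemma coprod0 : coprod [::] = [:: ([::] : forest, [::] : forest)].
Proof. by []. Qed.

Lemma sum_tcuts d (ch : forest) (g : forest * forest -> rat) :
  \sum_(p <- tcuts (Node d ch)) g p = g ([:: Node d ch], [::]) + \sum_(p <- coprod ch) g (p.1, [:: Node d p.2]).
Proof. by rewrite tcutsE big_cons big_map. Qed.

Lemma coprod1 (t : tree) : coprod [:: t] = tcuts t.
Proof.
rewrite coprod_consE coprod0; elim: (tcuts t) => [|[a b] l IH] //.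
by rewrite [LHS]/= IH !cats0.
Qed.

Lemma coprod_cons (t : tree) (F : forest) (g : forest * forest -> rat) :
  \sum_(p <- coprod (t :: F)) g p =
  \sum_(p <- tcuts t) \sum_(q <- coprod F) g (p.1 ++ q.1, p.2 ++ q.2).
Proof. by rewrite coprod_consE big_allpairs_dep. Qed.

Lemma coprod_cat (F1 F2 : forest) (g : forest * forest -> rat) :
  \sum_(p <- coprod (F1 ++ F2)) g p =
  \sum_(p <- coprod F1) \sum_(q <- coprod F2) g (p.1 ++ q.1, p.2 ++ q.2).
Proof.
elim: F1 g => [|t F1 IH] g.
  by rewrite coprod0 big_cons big_nil addr0; apply: eq_bigr => -[].
rewrite cat_cons !coprod_cons; apply: eq_bigr => p _; rewrite IH.
by apply: eq_bigr => q _; apply: eq_bigr => r _; rewrite !catA.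
Qed.

Lemma counit_r (F : forest) (g : forest -> rat) :
  \sum_(p <- coprod F) (p.2 == [::])%:R * g p.1 = g F.
Proof.
elim: F g => [|t F IH] g; first by rewrite coprod0 big_cons big_nil addr0 mul1r.
rewrite coprod_cons.
transitivity (\sum_(p <- tcuts t) (p.2 == [::])%:R * g (p.1 ++ F)).
  apply: eq_bigr => p _; rewrite -(IH (fun x => (p.2 == [::])%:R * g (p.1 ++ x))).
  apply: eq_bigr => q _; rewrite cat_eqnil.
  by case: (p.2 == [::]); case: (q.2 == [::]); rewrite /= ?mul0r ?mul1r.
rewrite /tcuts big_cons big_map big1 ?addr0 ?mul1r //.
by move=> p _; rewrite mul0r.
Qed.

Lemma counit_l (F : forest) (g : forest -> rat) :
  \sum_(p <- coprod F) (p.1 == [::])%:R * g p.2 = g F.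
Proof.
move: F g; apply: (proj2 (@nested_ind
  (fun t => forall g : forest -> rat, \sum_(p <- tcuts t) (p.1 == [::])%:R * g p.2 = g [:: t])
  (fun F => forall g : forest -> rat, \sum_(p <- coprod F) (p.1 == [::])%:R * g p.2 = g F) _ _ _)).
- by move=> g; rewrite coprod0 big_cons big_nil addr0 mul1r.
- move=> t F Ht HF g; rewrite coprod_cons.
  transitivity (\sum_(p <- tcuts t) (p.1 == [::])%:R * g (p.2 ++ F)).
    apply: eq_bigr => p _; rewrite -(HF (fun x => (p.1 == [::])%:R * g (p.2 ++ x))).
    apply: eq_bigr => q _; rewrite cat_eqnil.
    by case: (p.1 == [::]); case: (q.1 == [::]); rewrite /= ?mul0r ?mul1r.
  by rewrite (Ht (fun x => g (x ++ F))).
- move=> d ch IH g; rewrite tcutsE big_cons /= mul0r add0r big_map.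
  exact: (IH (fun x => g [:: Node d x])).
Qed.


Lemma swap_mid (A B X Y : Type) (sA : seq A) (sB : seq B) (sX : A -> seq X) (sY : B -> seq Y)
  (h : A -> X -> B -> Y -> rat) :
  \sum_(a <- sA) \sum_(b <- sB) \sum_(x <- sX a) \sum_(y <- sY b) h a x b y =
  \sum_(a <- sA) \sum_(x <- sX a) \sum_(b <- sB) \sum_(y <- sY b) h a x b y.
Proof. by apply: eq_bigr => a _; rewrite exchange_big. Qed.

Lemma swap4 (A B X Y : Type) (sA : seq A) (sB : seq B) (sX : A -> seq X) (sY : B -> seq Y)
  (h : A -> X -> B -> Y -> rat) :
  \sum_(a <- sA) \sum_(x <- sX a) \sum_(b <- sB) \sum_(y <- sY b) h a x b y =
  \sum_(b <- sB) \sum_(y <- sY b) \sum_(a <- sA) \sum_(x <- sX a) h a x b y.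
Proof.
rewrite -swap_mid exchange_big; apply: eq_bigr => b _.
transitivity (\sum_(a <- sA) \sum_(y <- sY b) \sum_(x <- sX a) h a x b y).
  by apply: eq_bigr => a _; rewrite exchange_big.
by rewrite exchange_big.
Qed.

Definition CAf (l : seq (forest * forest)) := forall f : forest -> forest -> forest -> rat,
  \sum_(p <- l) \sum_(q <- coprod p.2) f p.1 q.1 q.2 =
  \sum_(p <- l) \sum_(q <- coprod p.1) f q.1 q.2 p.2.

Lemma coassoc_all : (forall t : tree, CAf (tcuts t)) /\ (forall F : forest, CAf (coprod F)).
Proof.
apply: nested_ind.
- by move=> f; rewrite coprod0 !big_seq1.
- move=> t F Ht HF f; rewrite !coprod_cons.
  transitivity (\sum_(a <- tcuts t) \sum_(b <- coprod F) \sum_(x <- coprod a.2) \sum_(y <- coprod b.2)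
     f (a.1 ++ b.1) (x.1 ++ y.1) (x.2 ++ y.2)).
    by apply: eq_bigr => a _; apply: eq_bigr => b _; rewrite coprod_cat.
  rewrite swap_mid.
  transitivity (\sum_(a <- tcuts t) \sum_(x <- coprod a.2) \sum_(b <- coprod F) \sum_(y <- coprod b.1)
     f (a.1 ++ y.1) (x.1 ++ y.2) (x.2 ++ b.2)).
    apply: eq_bigr => a _; apply: eq_bigr => x _.
    exact: (HF (fun u v w => f (a.1 ++ u) (x.1 ++ v) (x.2 ++ w))).
  rewrite swap4.
  transitivity (\sum_(a <- tcuts t) \sum_(b <- coprod F) \sum_(x <- coprod a.1) \sum_(y <- coprod b.1)
     f (x.1 ++ y.1) (x.2 ++ y.2) (a.2 ++ b.2)); last first.
    by apply: eq_bigr => a _; apply: eq_bigr => b _; rewrite coprod_cat.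
  rewrite [RHS]swap_mid [RHS]swap4; apply: eq_bigr => b _; apply: eq_bigr => y _.
  exact: (Ht (fun u v w => f (u ++ y.1) (v ++ y.2) (w ++ b.2))).
- move=> d ch IH f; rewrite !sum_tcuts coprod0 coprod1 sum_tcuts big_seq1.
  rewrite -!addrA; congr (_ + _).
  under eq_bigr do rewrite coprod1 sum_tcuts.
  rewrite big_split /=; congr (_ + _).
  exact: (IH (fun u v w => f u v [:: Node d w])).
Qed.

Lemma coassoc (F : forest) (f : forest -> forest -> forest -> rat) :
  \sum_(p <- coprod F) \sum_(q <- coprod p.2) f p.1 q.1 q.2 =
  \sum_(p <- coprod F) \sum_(q <- coprod p.1) f q.1 q.2 p.2.
Proof. exact: (proj2 coassoc_all). Qed.

Lemma pairF_nil (G : forest) : pairF [::] G = (G == [::])%:R.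
Proof. by case: G. Qed.

Lemma pairF1 (t : tree) (G : forest) : pairF [:: t] G = pairT t G.
Proof. by []. Qed.

Lemma pairT_node d (ch G : forest) :
  pairT (Node d ch) G = if gamma d G is Some G' then pairF ch G' else 0.
Proof. by []. Qed.

Lemma pairF_cons (t : tree) (F G : forest) :
  pairF (t :: F) G = \sum_(p <- coprod G) pairT t p.1 * pairF F p.2.
Proof.
case: F => [|t' F]; last by [].
rewrite pairF1 -[LHS](counit_r G (pairT t)); apply: eq_bigr => p _.
by rewrite pairF_nil mulrC.
Qed.

Lemma pairF_cat (F1 F2 G : forest) :
  pairF (F1 ++ F2) G = \sum_(p <- coprod G) pairF F1 p.1 * pairF F2 p.2.
Proof.
elim: F1 G => [|t F1 IH] G.
  by rewrite cat0s -[LHS](counit_l G (pairF F2)); apply: eq_bigr => p _; rewrite pairF_nil.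
rewrite cat_cons pairF_cons.
have E := coassoc G (fun a b c => pairT t a * pairF F1 b * pairF F2 c).
transitivity (\sum_(p <- coprod G) \sum_(q <- coprod p.2)
   pairT t p.1 * pairF F1 q.1 * pairF F2 q.2).
  by apply: eq_bigr => p _; rewrite IH mulr_sumr; apply: eq_bigr => q _; rewrite mulrA.
rewrite E; apply: eq_bigr => p _; rewrite pairF_cons mulr_suml //.
Qed.

Lemma node_eq (e d : D) (ch ch' : forest) :
  (Node e ch == Node d ch' :> tree) = (e == d) && (ch == ch').
Proof. by apply/eqP/andP => [[-> ->] | [/eqP -> /eqP ->]]. Qed.

Lemma gammaP d (G G' : forest) : (gamma d G == Some G') = (G == rcons G' (Node d [::])).
Proof.
rewrite /gamma; case/lastP: G => [|G t]; first by case: G'.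
rewrite rev_rcons revK eqseq_rcons; case: t => e [|c ch] /=; rewrite node_eq ?andbF //.
by case: (e == d) => //=; rewrite ?andbT ?andbF.
Qed.

Lemma gammaN d (G : forest) : gamma d G = None -> forall G', G != rcons G' (Node d [::]).
Proof. by move=> H G'; rewrite -gammaP H. Qed.

Fixpoint tsz (t : tree) : nat := let: Node _ ch := t in (sumn (map tsz ch)).+1.
Definition wt (F : forest) : nat := sumn (map tsz F).

Lemma wt_cons t F : wt (t :: F) = (tsz t + wt F)%N. Proof. by []. Qed.
Lemma wt_cat F1 F2 : wt (F1 ++ F2) = (wt F1 + wt F2)%N.
Proof. by rewrite /wt map_cat sumn_cat. Qed.
Lemma wt_rcons F t : wt (rcons F t) = (wt F + tsz t)%N.
Proof. by rewrite -cats1 wt_cat /wt /= addn0. Qed.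
Lemma tsz_node d ch : tsz (Node d ch) = (wt ch).+1. Proof. by []. Qed.
Lemma tsz_gt0 t : (0 < tsz t)%N. Proof. by case: t. Qed.
Lemma wt_eq0 F : (wt F == 0%N) = (F == [::]).
Proof. by case: F => [|t F] //; rewrite wt_cons addn_eq0; case: t. Qed.

Lemma wt_coprod_all :
  (forall t : tree, forall p, p \in tcuts t -> (wt p.1 + wt p.2 = tsz t)%N) /\
  (forall F : forest, forall p, p \in coprod F -> (wt p.1 + wt p.2 = wt F)%N).
Proof.
apply: nested_ind.
- by move=> p; rewrite coprod0 inE => /eqP ->.
- move=> t F Ht HF p; rewrite coprod_consE => /allpairsP [[a b] [/= Ha Hb ->]] /=.
  by rewrite !wt_cat wt_cons -(Ht _ Ha) -(HF _ Hb); exact: addnACA.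
- move=> d ch IH p; rewrite tcutsE inE => /orP [/eqP -> | /mapP [q Hq ->]] /=.
    by rewrite wt_cons /wt /= !addn0.
  rewrite -/(wt ch) -(IH _ Hq) wt_cons tsz_node; rewrite /wt /= addn0 addnS. done.
Qed.

Lemma wt_coprod (F : forest) p : p \in coprod F -> (wt p.1 + wt p.2 = wt F)%N.
Proof. exact: (proj2 wt_coprod_all). Qed.

Lemma pair_hom_all :
  (forall t : tree, forall G, tsz t != wt G -> pairT t G = 0) /\
  (forall F : forest, forall G, wt F != wt G -> pairF F G = 0).
Proof.
apply: nested_ind.
- move=> G; rewrite pairF_nil eq_sym wt_eq0; by case: (G == [::]).
- move=> t F Ht HF G H; rewrite pairF_cons big_seq big1 // => p /wt_coprod Hp.
  have [E|E] := eqVneq (tsz t) (wt p.1); last by rewrite Ht ?mul0r.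
  rewrite HF ?mulr0 //; apply: contra H => /eqP E2.
  by rewrite wt_cons -Hp E E2.
- move=> d ch IH G H; rewrite pairT_node.
  case E: (gamma d G) => [G'|] //; apply: IH.
  move/eqP: E; rewrite gammaP => /eqP EG; apply: contra H => /eqP E2.
  by rewrite EG wt_rcons tsz_node E2 addn1.
Qed.

Lemma pair_hom (F G : forest) : wt F != wt G -> pairF F G = 0.
Proof. exact: (proj2 pair_hom_all). Qed.

Lemma pair_int_all :
  (forall t : tree, forall G, pairT t G \is a Num.int) /\
  (forall F : forest, forall G, pairF F G \is a Num.int).
Proof.
apply: nested_ind.
- by move=> G; rewrite pairF_nil natr_int.
- move=> t F Ht HF G; rewrite pairF_cons; apply: rpred_sum => p _; exact: rpredM.
- move=> d ch IH G; rewrite pairT_node; case: (gamma d G) => // G'; exact: IH.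
Qed.

Lemma pair_int (F G : forest) : pairF F G \is a Num.int.
Proof. exact: (proj2 pair_int_all). Qed.

End Aux.

Section Gen.
Variable D : finType.
Local Notation tree := (ptree D).
Local Notation forest := (forest D).
Arguments coprod : simpl never.
Arguments tcuts : simpl never.
Arguments acuts : simpl never.

Definition phi (x : Hel D) (K : forest) : rat := \sum_(p <- x) p.1 * pairF p.2 K.
Definition intH (x : Hel D) : bool := all (fun p => p.1 \is a Num.int) x.
Definition gen (f : forest -> rat) : Prop := exists2 x, intH x & forall K, f K = phi x K.
Definition delta (F : forest) (G : forest) : rat := (F == G)%:R.

Lemma gen_ext f g : (forall K, f K = g K) -> gen f -> gen g.
Proof. by move=> H [x Hx Hf]; exists x => // K; rewrite -H. Qed.

Lemma gen0 : gen (fun _ => 0).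
Proof. by exists [::] => // K; rewrite /phi big_nil. Qed.

Lemma gen_nil : gen (delta [::]).
Proof.
exists [:: (1, [::])]; first by [].
by move=> K; rewrite /phi big_seq1 mul1r pairF_nil /delta eq_sym.
Qed.

Lemma gen_add f g : gen f -> gen g -> gen (fun K => f K + g K).
Proof.
move=> [x Hx Hf] [y Hy Hg]; exists (x ++ y); first by rewrite /intH all_cat; apply/andP.
by move=> K; rewrite /phi big_cat /= Hf Hg.
Qed.

Lemma gen_scale (z : rat) f : z \is a Num.int -> gen f -> gen (fun K => z * f K).
Proof.
move=> Hz [x Hx Hf]; exists [seq (z * p.1, p.2) | p <- x].
  rewrite /intH all_map; apply/allP => p Hp /=; apply: rpredM => //; exact: (allP Hx).
by move=> K; rewrite Hf /phi big_map mulr_sumr; apply: eq_bigr => p _; rewrite mulrA.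
Qed.

Lemma gen_sum (S : seq forest) (c : forest -> rat) (h : forest -> forest -> rat) :
  (forall K, K \in S -> c K \is a Num.int) -> (forall K, K \in S -> gen (h K)) ->
  gen (fun G => \sum_(K <- S) c K * h K G).
Proof.
elim: S => [|K S IH] Hc Hh.
  by apply: gen_ext gen0 => G; rewrite big_nil.
have H1 := gen_scale (Hc K (mem_head _ _)) (Hh K (mem_head _ _)).
have H2 : gen (fun G => \sum_(K <- S) c K * h K G).
  by apply: IH => K' HK'; [apply: Hc | apply: Hh]; rewrite in_cons HK' orbT.
by apply: gen_ext (gen_add H1 H2) => G; rewrite big_cons.
Qed.

Lemma gen_L d f : gen f -> gen (fun K => if gamma d K is Some K' then f K' else 0).
Proof.
move=> [x Hx Hf]; exists [seq (p.1, [:: Node d p.2]) | p <- x].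
  by rewrite /intH all_map.
move=> K; rewrite /phi big_map; case E: (gamma d K) => [K'|].
  by rewrite Hf /phi; apply: eq_bigr => p _; rewrite pairF1 pairT_node E.
by rewrite big1 // => p _; rewrite pairF1 pairT_node E mulr0.
Qed.

Lemma gen_mul f g : gen f -> gen g -> gen (fun K => \sum_(p <- coprod K) f p.1 * g p.2).
Proof.
move=> [x Hx Hf] [y Hy Hg]; exists [seq (p.1 * q.1, p.2 ++ q.2) | p <- x, q <- y].
  apply/allP => r /allpairsP [[p q] [/= Hp Hq ->]] /=.
  by apply: rpredM; [exact: (allP Hx) | exact: (allP Hy)].
move=> K; rewrite /phi big_allpairs_dep /=.
transitivity (\sum_(r <- coprod K) \sum_(p <- x) \sum_(q <- y)
   p.1 * pairF p.2 r.1 * (q.1 * pairF q.2 r.2)).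
  apply: eq_bigr => r _; rewrite Hf Hg /phi mulr_suml; apply: eq_bigr => p _.
  by rewrite mulr_sumr.
rewrite exchange_big; apply: eq_bigr => p _; rewrite exchange_big; apply: eq_bigr => q _.
rewrite pairF_cat mulr_sumr; apply: eq_bigr => r _; by rewrite mulrACA.
Qed.

End Gen.

Section Enum.
Variable D : finType.
Local Notation tree := (ptree D).
Local Notation forest := (forest D).
Arguments coprod : simpl never.
Arguments tcuts : simpl never.
Arguments acuts : simpl never.

Fixpoint fw (fuel n : nat) : seq forest :=
  if fuel is fuel'.+1 then
    if n is n'.+1 then
      flatten [seq [seq t :: g | t <- [seq Node d f | d <- enum D, f <- fw fuel' k],
                                 g <- fw fuel' (n' - k)] | k <- iota 0 n]
    else [:: [::]]
  else [::].

Lemma fwS fuel n : fw fuel.+1 n.+1 =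
  flatten [seq [seq t :: g | t <- [seq Node d f | d <- enum D, f <- fw fuel k],
                                 g <- fw fuel (n - k)] | k <- iota 0 n.+1].
Proof. by []. Qed.

Lemma fw_complete fuel (F : forest) : (wt F < fuel)%N -> F \in fw fuel (wt F).
Proof.
elim: fuel F => [|fuel IH] [|[d f] F] H //.
rewrite wt_cons tsz_node addSn fwS.
apply/flatten_mapP; exists (wt f); first by rewrite mem_iota; lia.
apply: allpairs_f; last by rewrite addKn; apply: IH; rewrite wt_cons tsz_node in H; lia.
apply: allpairs_f; first by rewrite mem_enum.
by apply: IH; rewrite wt_cons tsz_node in H; lia.
Qed.

Definition allw (n : nat) : seq forest := undup (fw n.+1 n).

Lemma allw_complete (F : forest) : F \in allw (wt F).
Proof. by rewrite mem_undup; apply: fw_complete. Qed.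

Lemma allw_uniq n : uniq (allw n).
Proof. exact: undup_uniq. Qed.

Definition lastsz (F : forest) : nat := if rev F is t :: _ then tsz t else 0.

Lemma lastsz_rcons (F : forest) t : lastsz (rcons F t) = tsz t.
Proof. by rewrite /lastsz rev_rcons. Qed.

Lemma lastsz_nil : lastsz ([::] : forest) = 0%N.
Proof. by []. Qed.

Lemma wt_cat_eq (a b c : forest) : a ++ b = c -> (wt a + wt b = wt c)%N.
Proof. by move=> <-; rewrite wt_cat. Qed.

Lemma count_cut (C G' K : forest) d : ((wt C).+1 <= lastsz K)%N ->
  \sum_(p <- coprod K) delta C p.1 * delta (rcons G' (Node d [::])) p.2 =
  delta (rcons G' (Node d C)) K.
Proof.
case/lastP: K => [|K [e ch]]; first by rewrite lastsz_nil.
rewrite lastsz_rcons tsz_node ltnS => Hch.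
rewrite -cats1 coprod_cat.
under eq_bigr do rewrite coprod1 sum_tcuts.
have key : forall (p x : forest * forest), x \in coprod ch ->
  delta C (p.1 ++ x.1) * delta (rcons G' (Node d [::])) (p.2 ++ [:: Node e x.2]) =
  (p.1 == [::])%:R * ((G' == p.2)%:R * (((d == e) && (x.2 == [::]))%:R * (C == x.1)%:R)).
  move=> p x Hx; have Hw := wt_coprod Hx.
  rewrite /delta cats1 eqseq_rcons node_eq [[::] == _]eq_sym.
  case E2: (x.2 == [::]); last by rewrite !andbF /= ?(mulr0n, mulr1n, mulr0, mul0r, mulr1, mul1r).
  move/eqP: E2 => E2; rewrite E2 /= addn0 in Hw.
  case E1: (p.1 == [::]).
    move/eqP: E1 => ->; rewrite cat0s mul1r.
    by case: (G' == p.2); case: (d == e); case: (C == x.1); rewrite /= ?(mulr0n, mulr1n, mulr0, mul0r, mulr1, mul1r).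
  have -> : (C == p.1 ++ x.1) = false.
    apply/negbTE/eqP => EC; have := wt_cat_eq (esym EC); rewrite Hw.
    have : wt p.1 != 0%N by rewrite wt_eq0 E1.
    lia.
  by rewrite !mul0r.
transitivity (\sum_(p <- coprod K) (p.1 == [::])%:R * ((G' == p.2)%:R *
   \sum_(x <- coprod ch) ((d == e) && (x.2 == [::]))%:R * (C == x.1)%:R) : rat).
  apply: eq_bigr => p _.
  have -> : delta C (p.1 ++ [:: Node e ch]) = 0.
    rewrite /delta; case: eqP => // EC; have := wt_cat_eq (esym EC).
    rewrite wt_cons tsz_node /= => Hw; have : wt ([::] : forest) = 0%N by []. lia.
  rewrite mul0r add0r big_seq [in RHS]big_seq !mulr_sumr; apply: eq_bigr => x Hx /=.
  by rewrite key.
rewrite (counit_l K (fun y => (G' == y)%:R * _)).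
have -> : \sum_(x <- coprod ch) ((d == e) && (x.2 == [::]))%:R * (C == x.1)%:R =
   (d == e)%:R * (C == ch)%:R :> rat.
  case: (d == e); last by rewrite mul0r big1 // => x _; rewrite mul0r.
  by rewrite mul1r -(counit_r ch (fun y => (C == y)%:R)).
rewrite /delta cats1 eqseq_rcons node_eq.
by case: (G' == K); case: (d == e); case: (C == ch); rewrite /= ?(mulr0n, mulr1n, mulr0, mul0r, mulr1, mul1r).
Qed.

Lemma delta_sum (S : seq forest) (c : forest -> rat) K : uniq S ->
  \sum_(K0 <- S) c K0 * delta K0 K = (K \in S)%:R * c K.
Proof.
elim: S => [|K0 S IH] /=; first by rewrite big_nil mul0r.
case/andP => HK0 HS; rewrite big_cons IH // in_cons /delta.
case: (eqVneq K0 K) => [<-|NE].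
  by rewrite (negbTE HK0) /= ?(mulr0n, mulr1n, mulr0, mul0r, mulr1, mul1r, addr0).
by rewrite /= ?(mulr0n, mulr1n, mulr0, mul0r, mulr1, mul1r, addr0, add0r).
Qed.

Lemma gen_delta_aux (n : nat) : (forall G : forest, (wt G < n)%N -> gen (delta G)) ->
  forall s (G : forest), wt G = n -> (lastsz G <= s)%N -> gen (delta G).
Proof.
move=> IHn; elim=> [|s IHs] G HGw HGs.
  case/lastP: G HGw HGs => [|G t] _; first by move=> _; exact: gen_nil.
  by rewrite lastsz_rcons; case: t.
case: (ltnP s (lastsz G)) => Hls; last exact: IHs.
case/lastP: G HGw HGs Hls => [|G' [d C]] HGw HGs Hls; first exact: gen_nil.
rewrite lastsz_rcons tsz_node in HGs Hls.
have HGw' : (wt G' + (wt C).+1)%N = n by rewrite -HGw wt_rcons tsz_node.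
case: (eqVneq C [::]) => [EC | NC].
  subst C; have H1 : (wt G' < n)%N by rewrite -HGw'; lia.
  apply: gen_ext (gen_L d (IHn G' H1)) => K.
  case E: (gamma d K) => [K'|].
    by move/eqP: E; rewrite gammaP => /eqP ->; rewrite /delta eqseq_rcons eqxx andbT.
  by rewrite /delta eq_sym (negbTE (gammaN E G')).
have wC : wt C != 0%N by rewrite wt_eq0.
set R := rcons G' (Node d [::]).
have wR : wt R = (wt G').+1 by rewrite /R wt_rcons tsz_node addn1.
have hC : gen (delta C) by apply: IHn; lia.
have hR : gen (delta R) by apply: IHn; lia.
have hh := gen_mul hC hR.
set h := fun K => \sum_(p <- coprod K) delta C p.1 * delta R p.2.
set S := [seq K <- allw n | (wt K == n) && (lastsz K <= s)%N].
have hint : forall K, h K \is a Num.int.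
  by move=> K; apply: rpred_sum => p _; apply: rpredM; apply: natr_int.
have hcorr : gen (fun G => \sum_(K0 <- S) h K0 * delta K0 G).
  apply: gen_sum => K0 HK0; first exact: hint.
  by move: HK0; rewrite mem_filter => /andP [/andP [/eqP HK1 HK2] _]; apply: IHs.
have hm1 : (-1 : rat) \is a Num.int by rewrite rpredN rpred1.
apply: gen_ext (gen_add hh (gen_scale hm1 hcorr)) => K.
rewrite delta_sum; last by apply: filter_uniq; exact: allw_uniq.
rewrite -/(h K).
case KS: (K \in S).
  move: KS; rewrite mem_filter => /andP [/andP [/eqP HK1 HK2] _].
  rewrite mul1r mulN1r subrr /delta; case: eqP => // EK.
  by move: HK2; rewrite -EK lastsz_rcons tsz_node; lia.
rewrite mul0r mulr0 addr0.
case: (eqVneq (wt K) n) => HKn.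
  have HK : (s < lastsz K)%N.
    move: KS; rewrite mem_filter HKn eqxx /=.
    have -> : K \in allw n by rewrite -HKn allw_complete.
    by rewrite andbT => /negbT; rewrite -ltnNge.
  rewrite /h /R count_cut //; lia.
have -> : delta (rcons G' (Node d C)) K = 0.
  by rewrite /delta; case: eqP => // EK; move: HKn; rewrite -EK HGw eqxx.
rewrite /h big_seq big1 // => p Hp; rewrite /delta.
case: eqP => [E1|]; last by rewrite mul0r.
case: eqP => [E2|]; last by rewrite mulr0.
move: HKn; rewrite -(wt_coprod Hp) -E1 -E2 wR; lia.
Qed.

Lemma gen_delta (G : forest) : gen (delta G).
Proof.
have : forall n (G : forest), (wt G < n)%N -> gen (delta G).
  elim=> [|n IH] G0 H //; case: (ltnP (wt G0) n) => H2; first exact: IH.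
  have E : wt G0 = n by lia.
  exact: (@gen_delta_aux n IH (lastsz G0) G0 E (leqnn _)).
by apply; exact: ltnSn.
Qed.

End Enum.

Section Inj.
Variable D : finType.
Local Notation tree := (ptree D).
Local Notation forest := (forest D).
Arguments coprod : simpl never.
Arguments tcuts : simpl never.
Arguments acuts : simpl never.

Lemma gen_delta' (G : forest) :
  exists x : Hel D, intH x /\ forall K, delta G K = phi x K.
Proof. by have [x Hx HK] := gen_delta G; exists x. Qed.

Definition e0 (G : forest) : Hel D :=
  proj1_sig (constructive_indefinite_description _ (gen_delta' G)).

Lemma e0P (G : forest) : intH (e0 G) /\ forall K, delta G K = phi (e0 G) K.
Proof. exact: (proj2_sig (constructive_indefinite_description _ (gen_delta' G))). Qed.

Lemma phi_coef (x : Hel D) (S : seq forest) K : uniq S ->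
  (forall H, H \notin S -> pairF H K = 0) ->
  phi x K = \sum_(H <- S) coef x H * pairF H K.
Proof.
move=> uS HS; elim: x => [|p x IH].
  by rewrite /phi big_nil big1 // => H _; rewrite /coef big_nil mul0r.
rewrite /phi big_cons -/(phi x K) IH.
transitivity (\sum_(H <- S) (p.1 * pairF H K) * delta H p.2 + \sum_(H <- S) coef x H * pairF H K).
  rewrite delta_sum //; congr (_ + _).
  by case: (boolP (p.2 \in S)) => Hp; rewrite /= ?mul1r ?mul0r // HS // mulr0.
rewrite -big_split /=; apply: eq_bigr => H _.
rewrite /coef big_cons /delta eq_sym; case: (p.2 == H); rewrite /= ?(mulr0n, mulr1n, mulr0, mul0r, mulr1, mul1r, addr0, add0r) //.
by rewrite mulrDl.
Qed.

Definition wS (n : nat) : seq forest := [seq K <- allw D n | wt K == n].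

Lemma wS_uniq n : uniq (wS n).
Proof. by apply: filter_uniq; exact: allw_uniq. Qed.

Lemma mem_wS n (K : forest) : (K \in wS n) = (wt K == n).
Proof.
rewrite mem_filter; case: eqP => //= <-; exact: allw_complete.
Qed.

Lemma phi_wS (x : Hel D) K : phi x K = \sum_(H <- wS (wt K)) coef x H * pairF H K.
Proof.
apply: phi_coef; first exact: wS_uniq.
by move=> H; rewrite mem_wS => HH; apply: pair_hom.
Qed.

Lemma sum_ord (S : seq forest) (f : forest -> rat) :
  \sum_(l < size S) f (nth [::] S l) = \sum_(H <- S) f H.
Proof. by rewrite (big_nth [::]) big_mkord. Qed.

Lemma inj (c : Hel D) : (forall K, phi c K = 0) -> forall F, coef c F = 0.
Proof.
move=> Hc F.
set S := wS (wt F); set k := size S.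
have uS : uniq S := wS_uniq _.
pose M : 'M[rat]_k := \matrix_(i, j) pairF (nth [::] S i) (nth [::] S j).
pose X : 'M[rat]_k := \matrix_(i, j) coef (e0 (nth [::] S i)) (nth [::] S j).
have memS : forall j : 'I_k, nth [::] S j \in S by move=> j; apply: mem_nth.
have wtS : forall j : 'I_k, wt (nth [::] S j) = wt F.
  by move=> j; have := memS j; rewrite mem_wS => /eqP.
have phiS : forall (x : Hel D) (j : 'I_k),
    phi x (nth [::] S j) = \sum_(H <- S) coef x H * pairF H (nth [::] S j).
  by move=> x j; rewrite phi_wS wtS.
have XM : X *m M = 1%:M.
  apply/matrixP => i j; rewrite !mxE.
  under eq_bigr do rewrite !mxE.
  rewrite (sum_ord S (fun H => coef (e0 (nth [::] S i)) H * pairF H (nth [::] S j))).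
  by rewrite -phiS -(proj2 (e0P _)) /delta nth_uniq.
have MX := mulmx1C XM.
pose v : 'rV[rat]_k := \row_j coef c (nth [::] S j).
have vM : v *m M = 0.
  apply/rowP => j; rewrite !mxE.
  under eq_bigr do rewrite !mxE.
  rewrite (sum_ord S (fun H => coef c H * pairF H (nth [::] S j))).
  by rewrite -phiS Hc.
have v0 : v = 0 by rewrite -[v]mulmx1 -MX mulmxA vM mul0mx.
have FS : F \in S by rewrite mem_wS.
have Hi : (index F S < k)%N by rewrite index_mem.
have := congr1 (fun w : 'rV[rat]_k => w 0 (Ordinal Hi)) v0.
by rewrite !mxE /= nth_index.
Qed.

End Inj.

Section Main.
Variable D : finType.
Local Notation tree := (ptree D).
Local Notation forest := (forest D).

Lemma form_basis (x : Hel D) G : Defs.form x (basisH G) = phi x G.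
Proof. by rewrite /form /phi; apply: eq_bigr => p _; rewrite big_seq1 mulr1. Qed.

Lemma coef_cat (x y : Hel D) F : coef (x ++ y) F = coef x F + coef y F.
Proof. by rewrite /coef big_cat. Qed.

Lemma coef_scale a (x : Hel D) F : coef (scaleH a x) F = a * coef x F.
Proof. by rewrite /coef /scaleH big_map mulr_sumr. Qed.

Lemma phi_cat (x y : Hel D) K : phi (x ++ y) K = phi x K + phi y K.
Proof. by rewrite /phi big_cat. Qed.

Lemma phi_scale a (x : Hel D) K : phi (scaleH a x) K = a * phi x K.
Proof. by rewrite /phi /scaleH big_map mulr_sumr; apply: eq_bigr => p _; rewrite mulrA. Qed.

Lemma coef_eq (x y : Hel D) : (forall K, phi x K = phi y K) -> forall F, coef x F = coef y F.
Proof.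
move=> H F; have H0 : coef (x ++ scaleH (-1) y) F = 0.
  by apply: inj => K; rewrite phi_cat phi_scale H mulN1r subrr.
by move: H0; rewrite coef_cat coef_scale mulN1r => /eqP; rewrite subr_eq0 => /eqP.
Qed.

Lemma phi_zcomb (e : forest -> Hel D) c K :
  phi (zcomb e c) K = \sum_(p <- c) p.1%:~R * phi (e p.2) K.
Proof. rewrite /zcomb /phi big_flatten big_map; apply: eq_bigr => p _; exact: phi_scale. Qed.

Lemma coef_int (x : Hel D) F : intH x -> coef x F \is a Num.int.
Proof. move=> Hx; rewrite /coef big_seq_cond; apply: rpred_sum => p /andP [Hp _]; exact: (allP Hx p Hp). Qed.

Lemma sum_uniq2 (c : seq (int * forest)) p : uniq (unzip2 c) -> p \in c ->
  \sum_(q <- c) q.1%:~R * delta q.2 p.2 = p.1%:~R :> rat.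
Proof.
elim: c => [|q c IH] //= /andP [Hq Hu]; rewrite in_cons big_cons.
case/orP => [/eqP -> | Hp].
  rewrite /delta eqxx mulr1 big_seq big1 ?addr0 // => q' Hq'.
  case: eqP => [E|]; last by rewrite mulr0.
  by move: Hq; rewrite -E (map_f snd Hq').
rewrite IH // /delta; case: eqP => [E|]; last by rewrite mulr0 add0r.
by move: Hq; rewrite E (map_f snd Hp).
Qed.

End Main.

Local Close Scope ring_scope.

Theorem mainTheorem5 (D : finType) (HD : (0 < #|D|)%N) :
  (exists e : forest D -> Hel D, dual_basis e) /\
  (forall e : forest D -> Hel D, dual_basis e -> is_Zbasis_of_A e).
Proof.
split.
  by exists (@e0 D) => F G; rewrite form_basis -(proj2 (e0P F)).
move=> e He.
have phie : forall F K, phi (e F) K = delta F K by move=> F K; rewrite -form_basis He.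
have ee0 : forall F G, coef (e F) G = coef (e0 F) G.
  by move=> F; apply: coef_eq => K; rewrite phie -(proj2 (e0P F)).
split.
- by move=> F G; rewrite ee0; apply: coef_int; exact: (proj1 (e0P F)).
- move=> c Hu H0 p Hp.
  have Z : forall K, phi (zcomb e c) K = 0%R.
    by move=> K; rewrite phi_wS big1 // => H _; rewrite H0 mul0r.
  have := Z p.2; rewrite phi_zcomb.
  under eq_bigr do rewrite phie.
  by rewrite sum_uniq2 // => /eqP; rewrite intr_eq0 => /eqP.
- move=> x Hx.
  pose Sx := undup (flatten [seq allw D (wt p.2) | p <- x]).
  have aint : forall F, phi x F \is a Num.int.
    move=> F; rewrite phi_wS; apply: rpred_sum => H _; apply: rpredM => //; exact: pair_int.
  exists [seq (numq (phi x F), F) | F <- Sx] => G.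
  apply: coef_eq => K; rewrite phi_zcomb big_map.
  under eq_bigr do rewrite /= phie numqK ?aint //.
  rewrite delta_sum ?undup_uniq //.
  case: (boolP (K \in Sx)) => HK; first by rewrite mul1r.
  rewrite mul0r /phi big_seq big1 // => p Hp.
  case: (eqVneq (wt p.2) (wt K)) => E; last by rewrite pair_hom ?mulr0.
  exfalso; move/negP: HK; apply; rewrite mem_undup; apply/flatten_mapP.
  by exists p => //; rewrite E allw_complete.
Qed.
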